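(* For every $M\in\Lambda^{001}$ the following are equivalent: (1) $M$ is solvable in $\Lambda^{001}$; (2) $M$ is head-normalisable, i.e. $M\longrightarrow_h^* N$ for some $N$ in head normal form; (3) $M$ is solvable in $\Lambda$.
   Context: $\Lambda^{001}$ is the set of possibly infinite λ-terms (trees of variables, abstractions and applications $(M)N$) whose infinite branches all enter infinitely often the argument position $N$ of an application, up to α-equivalence; $\Lambda\subseteq\Lambda^{001}$ is the set of finite λ-terms. $\longrightarrow_\beta$ is one-step β-reduction (contextual closure of $(\lambda x.M)N\to M[N/x]$), $\longrightarrow_\beta^*$ its reflexive-transitive closure. The infinitary reduction $\longrightarrow_\beta^\infty$ is defined by the rules below, with possibly infinite derivations in which every infinite branch passes infinitely often through the third premise of (@): (var) $M\longrightarrow_\beta^* x\Rightarrow M\longrightarrow_\beta^\infty x$; (λ) $M\longrightarrow_\beta^*\lambda x.P$, $P\longrightarrow_\beta^\infty P'$ $\Rightarrow M\longrightarrow_\beta^\infty\lambda x.P'$; (@) $M\longrightarrow_\beta^*(P)Q$, $P\longrightarrow_\beta^\infty P'$, $Q\longrightarrow_\beta^\infty Q'$ $\Rightarrow M\longrightarrow_\beta^\infty(P')Q'$. Head normal forms are terms $\lambda x_1\dots\lambda x_m.(\dots((y)Q_1)\dots)Q_n$; head reduction $\longrightarrow_h$ contracts the redex $(\lambda z.N)P$ of a term $\lambda x_1\dots\lambda x_m.(\dots((\lambda z.N)P)Q_1\dots)Q_n$. A term $M\in\Lambda^{001}$ is solvable in $\Lambda$ (resp. in $\Lambda^{001}$)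 if there exist variables $x_1,\dots,x_m$ and terms $N_1,\dots,N_n\in\Lambda$ (resp. $\in\Lambda^{001}$) such that $(\dots((\lambda x_1\dots\lambda x_m.M)N_1)\dots)N_n\longrightarrow_\beta^*\lambda x.x$ (resp. $\longrightarrow_\beta^\infty\lambda x.x$). *)

(* Defs.v *)
(* Possibly infinite lambda-terms as a coinductive type with
   de Bruijn indices (so alpha-equivalence is built in); free variables are
   the indices that escape all binders and play the role of variable names. *)
From Stdlib Require Import Arith List Relations.
Import ListNotations.

CoInductive term : Type :=
| Var (n : nat)
| Lam (t : term)
| App (t u : term).

CoInductive bisim : term -> term -> Prop :=
| bis_var n : bisim (Var n) (Var n)
| bis_lam t t' : bisim t t' -> bisim (Lam t) (Lam t')
| bis_app t u t' u' : bisim t t' -> bisim u u' -> bisim (App t u) (App t' u').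

Definition up (f : nat -> nat) (n : nat) : nat :=
  match n with 0 => 0 | S k => S (f k) end.

CoFixpoint ren (f : nat -> nat) (t : term) : term :=
  match t with
  | Var n => Var (f n)
  | Lam b => Lam (ren (up f) b)
  | App a b => App (ren f a) (ren f b)
  end.

(* subst k N t : replace index k by N (N lives in the context of t), and
   decrement indices above k. *)
CoFixpoint subst (k : nat) (N : term) (t : term) : term :=
  match t with
  | Var n => if n <? k then Var n else if n =? k then N else Var (pred n)
  | Lam b => Lam (subst (S k) (ren S N) b)
  | App a b => App (subst k N a) (subst k N b)
  end.

(* Lambda^{001}: every infinite branch enters the argument position of an
   application infinitely often, i.e. the greatest P such that each term of P
   has a finite "spine" (through lambda-bodies and function positions) whose
   argument subterms are again in P. *)
Inductive spine001 (P : term -> Prop) : term -> Prop :=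
| s_var n : spine001 P (Var n)
| s_lam t : spine001 P t -> spine001 P (Lam t)
| s_app t u : spine001 P t -> P u -> spine001 P (App t u).

Definition in001 (t : term) : Prop :=
  exists P : term -> Prop, (forall u, P u -> spine001 P u) /\ P t.

Inductive finite_term : term -> Prop :=
| f_var n : finite_term (Var n)
| f_lam t : finite_term t -> finite_term (Lam t)
| f_app t u : finite_term t -> finite_term u -> finite_term (App t u).

Inductive bstep : term -> term -> Prop :=
| b_beta M N : bstep (App (Lam M) N) (subst 0 N M)
| b_lam M M' : bstep M M' -> bstep (Lam M) (Lam M')
| b_appl M M' N : bstep M M' -> bstep (App M N) (App M' N)
| b_appr M N N' : bstep N N' -> bstep (App M N) (App M N').

(* Reflexive-transitive closure, up to bisimilarity (= syntactic identity). *)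
Definition red_star : term -> term -> Prop :=
  clos_refl_trans term (fun a b => bstep a b \/ bisim a b).

(* Infinitary reduction: rules (var), (lambda), (@) with possibly infinite
   derivations, every infinite branch passing infinitely often through the
   third premise of (@).  inf_step R is the inductive part (finitely many
   (lambda)- and first-premise-(@) steps), R the coinductive hypothesis used
   only at the third premise of (@). *)
Inductive inf_step (R : term -> term -> Prop) : term -> term -> Prop :=
| i_var M x : red_star M (Var x) -> inf_step R M (Var x)
| i_lam M P P' : red_star M (Lam P) -> inf_step R P P' -> inf_step R M (Lam P')
| i_app M P Q P' Q' :
    red_star M (App P Q) -> inf_step R P P' -> R Q Q' ->
    inf_step R M (App P' Q').

Definition inf_red (M N : term) : Prop :=
  exists R : term -> term -> Prop,
    (forall a b, R a b -> inf_step R a b) /\ R M N.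

Inductive hstep : term -> term -> Prop :=
| h_beta M N : hstep (App (Lam M) N) (subst 0 N M)
| h_lam M M' : hstep M M' -> hstep (Lam M) (Lam M')
| h_app M M' N : hstep M M' -> (forall b, M <> Lam b) -> hstep (App M N) (App M' N).

Definition hred_star : term -> term -> Prop :=
  clos_refl_trans term (fun a b => hstep a b \/ bisim a b).

Inductive head_var : term -> Prop :=
| hv_var n : head_var (Var n)
| hv_app t u : head_var t -> head_var (App t u).

Inductive hnf : term -> Prop :=
| hnf_hv t : head_var t -> hnf t
| hnf_lam t : hnf t -> hnf (Lam t).

Definition head_normalisable (M : term) : Prop :=
  exists N, hred_star M N /\ hnf N.

Definition abs (x : nat) (M : term) : term :=
  Lam (ren (fun n => if n =? x then 0 else S n) M).

Definition abs_list (xs : list nat) (M : term) : term := fold_right abs M xs.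

Definition apps (M : term) (Ns : list term) : term :=
  fold_left (fun acc N => App acc N) Ns M.

Definition ident : term := Lam (Var 0).

Definition solvable_fin (M : term) : Prop :=
  exists (xs : list nat) (Ns : list term),
    Forall finite_term Ns /\ red_star (apps (abs_list xs M) Ns) ident.

Definition solvable_001 (M : term) : Prop :=
  exists (xs : list nat) (Ns : list term),
    Forall in001 Ns /\ inf_red (apps (abs_list xs M) Ns) ident.

(* Main.v *)
Require Import Defs.
From Stdlib Require Import Arith List Relations Lia FunctionalExtensionality.
Import ListNotations.

Definition frob (t : term) : term :=
  match t with Var n => Var n | Lam b => Lam b | App a b => App a b end.
Lemma frob_eq t : t = frob t. Proof. destruct t; reflexivity. Qed.

Lemma ren_var f n : ren f (Var n) = Var (f n).
Proof. rewrite (frob_eq (ren f (Var n))). reflexivity. Qed.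
Lemma ren_lam f b : ren f (Lam b) = Lam (ren (up f) b).
Proof. rewrite (frob_eq (ren f (Lam b))). reflexivity. Qed.
Lemma ren_app f a b : ren f (App a b) = App (ren f a) (ren f b).
Proof. rewrite (frob_eq (ren f (App a b))). reflexivity. Qed.
Lemma subst_var k N n : subst k N (Var n) =
  if n <? k then Var n else if n =? k then N else Var (pred n).
Proof.
  transitivity (frob (subst k N (Var n))). apply frob_eq. simpl.
  destruct (n <? k); [reflexivity|]. destruct (n =? k); [symmetry; apply frob_eq|reflexivity].
Qed.
Lemma subst_lam k N b : subst k N (Lam b) = Lam (subst (S k) (ren S N) b).
Proof. rewrite (frob_eq (subst k N (Lam b))). reflexivity. Qed.
Lemma subst_app k N a b : subst k N (App a b) = App (subst k N a) (subst k N b).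
Proof. rewrite (frob_eq (subst k N (App a b))). reflexivity. Qed.

Inductive bisimF (R : term -> term -> Prop) : term -> term -> Prop :=
| bf_var n : bisimF R (Var n) (Var n)
| bf_lam t t' : R t t' -> bisimF R (Lam t) (Lam t')
| bf_app t u t' u' : R t t' -> R u u' -> bisimF R (App t u) (App t' u').

Lemma bisim_coind (R : term -> term -> Prop) :
  (forall a b, R a b -> bisimF R a b) -> forall a b, R a b -> bisim a b.
Proof.
  intros H. cofix CIH. intros a b Hab. destruct (H a b Hab).
  - constructor.
  - constructor. apply CIH; assumption.
  - constructor; apply CIH; assumption.
Qed.

Lemma bisim_coind_upto (R : term -> term -> Prop) :
  (forall a b, R a b -> bisimF (fun x y => R x y \/ bisim x y) a b) ->
  forall a b, R a b -> bisim a b.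
Proof.
  intros H a b Hab. apply (bisim_coind (fun x y => R x y \/ bisim x y)); [|left; auto].
  intros x y [Hr|Hb]. apply H; auto.
  destruct Hb; constructor; right; auto.
Qed.

Lemma bisim_F (R : term -> term -> Prop) a b : bisim a b ->
  bisimF (fun x y => R x y \/ bisim x y) a b.
Proof. intros Hb; destruct Hb; constructor; right; auto. Qed.

Lemma bisim_refl t : bisim t t.
Proof.
  apply (bisim_coind (fun x y => x = y)); [|reflexivity].
  intros a b ->. destruct b; constructor; reflexivity.
Qed.

Lemma bisim_sym a b : bisim a b -> bisim b a.
Proof.
  apply (bisim_coind (fun x y => bisim y x)). intros x y H. destruct H; constructor; auto.
Qed.

Lemma bisim_trans a b c : bisim a b -> bisim b c -> bisim a c.
Proof.
  intros H1 H2. apply (bisim_coind (fun x z => exists y, bisim x y /\ bisim y z)); [|eauto].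
  intros x z [y [Hxy Hyz]]. destruct Hxy; inversion Hyz; subst; constructor; eauto.
Qed.

Lemma ren_bisim f a b : bisim a b -> bisim (ren f a) (ren f b).
Proof.
  intros H. apply (bisim_coind (fun x y => exists f a b, bisim a b /\ x = ren f a /\ y = ren f b)); [|eauto 6].
  intros x y [g [a' [b' [Hb [-> ->]]]]]. destruct Hb.
  - rewrite !ren_var. constructor.
  - rewrite !ren_lam. constructor. eauto 6.
  - rewrite !ren_app. constructor; eauto 6.
Qed.

Lemma ren_ren f g t : bisim (ren f (ren g t)) (ren (fun n => f (g n)) t).
Proof.
  apply (bisim_coind (fun x y => exists f g t, x = ren f (ren g t) /\ y = ren (fun n => f (g n)) t)); [|eauto].
  intros x y [f' [g' [t' [-> ->]]]]. destruct t'.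
  - rewrite !ren_var. constructor.
  - rewrite !ren_lam. constructor. exists (up f'), (up g'), t'. split; [reflexivity|].
    f_equal. apply functional_extensionality. intros [|n]; reflexivity.
  - rewrite !ren_app. constructor; eauto.
Qed.

Fixpoint upn (k : nat) (f : nat -> nat) : nat -> nat :=
  match k with 0 => f | S k => up (upn k f) end.

Lemma upn_lt k f n : n < k -> upn k f n = n.
Proof.
  revert n; induction k; intros n H; [lia|]. simpl. destruct n; [reflexivity|].
  simpl. rewrite IHk; lia.
Qed.

Lemma upn_ge k f j : upn k f (k + j) = k + f j.
Proof. induction k; simpl; auto. Qed.

Lemma RS_shift k f N N' : bisim N' (ren (upn k f) N) ->
  bisim (ren S N') (ren (upn (S k) f) (ren S N)).
Proof.
  intros H. eapply bisim_trans. apply ren_bisim; eauto.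
  eapply bisim_trans. apply ren_ren. apply bisim_sym.
  exact (ren_ren (upn (S k) f) S N).
Qed.

Lemma RS k f N N' t : bisim N' (ren (upn k f) N) ->
  bisim (ren (upn k f) (subst k N t)) (subst k N' (ren (upn (S k) f) t)).
Proof.
  intros H.
  apply (bisim_coind_upto (fun x y => exists k f N N' t, bisim N' (ren (upn k f) N) /\
     x = ren (upn k f) (subst k N t) /\ y = subst k N' (ren (upn (S k) f) t))); [|eauto 10].
  clear. intros x y [k [f [N [N' [t [HN [-> ->]]]]]]]. destruct t as [n|b|a b].
  - rewrite ren_var, !subst_var.
    destruct (lt_eq_lt_dec n k) as [[Hl|He]|Hg].
    + rewrite upn_lt by lia. assert (n <? k = true) as E by (apply Nat.ltb_lt; lia).
      rewrite E, ren_var, upn_lt by lia. constructor.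
    + subst. rewrite Nat.ltb_irrefl, Nat.eqb_refl, upn_lt by lia.
      rewrite Nat.ltb_irrefl, Nat.eqb_refl. apply bisim_F. apply bisim_sym; auto.
    + assert (n <? k = false) as E by (apply Nat.ltb_ge; lia).
      assert (n =? k = false) as E2 by (apply Nat.eqb_neq; lia).
      rewrite E, E2, ren_var.
      destruct n as [|p]; [lia|]. simpl upn. simpl pred. unfold up at 1.
      replace p with (k + (p - k)) by lia. rewrite upn_ge.
      assert (S (k + f (p - k)) <? k = false) as E3 by (apply Nat.ltb_ge; lia).
      assert (S (k + f (p - k)) =? k = false) as E4 by (apply Nat.eqb_neq; lia).
      rewrite E3, E4. simpl. constructor.
  - rewrite subst_lam, !ren_lam, subst_lam. constructor. left.
    exists (S k), f, (ren S N), (ren S N'), b. split; [apply RS_shift; auto|].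
    split; reflexivity.
  - rewrite subst_app, !ren_app, subst_app. constructor; left; eauto 10.
Qed.

Lemma red_lift (F : term -> term) :
  (forall a b, bstep a b -> red_star (F a) (F b)) ->
  (forall a b, bisim a b -> bisim (F a) (F b)) ->
  forall a b, red_star a b -> red_star (F a) (F b).
Proof.
  intros H1 H2 a b H. induction H as [a b [Hs|Hb]| |].
  - apply H1; auto.
  - apply rt_step; right; apply H2; auto.
  - apply rt_refl.
  - eapply rt_trans; eauto.
Qed.

Lemma rs_step a b : bstep a b -> red_star a b.
Proof. intros; apply rt_step; left; auto. Qed.
Lemma rs_bisim a b : bisim a b -> red_star a b.
Proof. intros; apply rt_step; right; auto. Qed.

Lemma red_lam a b : red_star a b -> red_star (Lam a) (Lam b).
Proof.
  apply (red_lift Lam). intros; apply rs_step; constructor; auto.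
  intros; constructor; auto.
Qed.

Lemma red_appl c a b : red_star a b -> red_star (App a c) (App b c).
Proof.
  apply (red_lift (fun x => App x c)). intros; apply rs_step; constructor; auto.
  intros; constructor; auto using bisim_refl.
Qed.

Lemma red_apps Ns : forall a b, red_star a b -> red_star (apps a Ns) (apps b Ns).
Proof.
  induction Ns; intros x y H; simpl; auto. apply IHNs. apply red_appl; auto.
Qed.

Lemma ren_bstep a b : bstep a b -> forall f, red_star (ren f a) (ren f b).
Proof.
  induction 1; intros f.
  - rewrite ren_app, ren_lam. eapply rt_trans. apply rs_step. constructor.
    apply rs_bisim. apply bisim_sym. apply (RS 0 f N (ren f N) M). apply bisim_refl.
  - rewrite !ren_lam. apply red_lam; auto.
  - rewrite !ren_app. apply red_appl; auto.
  - rewrite !ren_app. apply (red_lift (fun x => App (ren f M) x)); auto.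
    intros; apply rs_step; constructor; auto.
    intros; constructor; auto using bisim_refl.
Qed.

Lemma red_ren f a b : red_star a b -> red_star (ren f a) (ren f b).
Proof.
  apply (red_lift (ren f)). intros; apply ren_bstep; auto. intros; apply ren_bisim; auto.
Qed.

Definition lamn (n : nat) (t : term) : term := Nat.iter n Lam t.
Definition PP (n : nat) : term := lamn n ident.

Lemma ren_PP n : forall f, ren f (PP n) = PP n.
Proof.
  unfold PP, ident; induction n; intros f; simpl.
  - rewrite ren_lam, ren_var. reflexivity.
  - rewrite ren_lam. f_equal. apply IHn.
Qed.

Lemma subst_PP n : forall k X, subst k X (PP n) = PP n.
Proof.
  unfold PP, ident; induction n; intros k X; simpl.
  - rewrite subst_lam, subst_var. reflexivity.
  - rewrite subst_lam. f_equal. apply IHn.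
Qed.

Lemma subst_lamn_closed X (HX : forall f, ren f X = X) j :
  forall k t, subst k X (lamn j t) = lamn j (subst (j + k) X t).
Proof.
  induction j; intros k t; simpl; auto.
  rewrite subst_lam, HX. f_equal. rewrite IHj. f_equal. f_equal. lia.
Qed.

Lemma upn_up m f : upn m (up f) = up (upn m f).
Proof. induction m; simpl; auto. rewrite IHm. reflexivity. Qed.

Lemma ren_lamn m : forall f t, ren f (lamn m t) = lamn m (ren (upn m f) t).
Proof.
  induction m; intros f t; simpl; auto.
  rewrite ren_lam. f_equal. rewrite IHm. rewrite upn_up. reflexivity.
Qed.

Lemma ren_apps f Qs : forall h, ren f (apps h Qs) = apps (ren f h) (map (ren f) Qs).
Proof. induction Qs; intros h; simpl; auto. rewrite IHQs, ren_app. reflexivity. Qed.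

Lemma subst_apps k X Qs : forall h, subst k X (apps h Qs) = apps (subst k X h) (map (subst k X) Qs).
Proof. induction Qs; intros h; simpl; auto. rewrite IHQs, subst_app. reflexivity. Qed.

Lemma head_var_dec H : head_var H -> exists y Qs, H = apps (Var y) Qs.
Proof.
  induction 1. exists n, []; reflexivity.
  destruct IHhead_var as [y [Qs ->]]. exists y, (Qs ++ [u]).
  unfold apps. rewrite fold_left_app. reflexivity.
Qed.

Lemma hnf_dec N : hnf N -> exists m y Qs, N = lamn m (apps (Var y) Qs).
Proof.
  induction 1.
  - destruct (head_var_dec _ H) as [y [Qs ->]]. exists 0, y, Qs; reflexivity.
  - destruct IHhnf as [m [y [Qs ->]]]. exists (S m), y, Qs; reflexivity.
Qed.

Lemma PP_reduce Qs : red_star (apps (PP (length Qs)) Qs) ident.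
Proof.
  induction Qs; simpl. apply rt_refl.
  eapply rt_trans; [|apply IHQs]. apply red_apps. apply rs_step.
  unfold PP at 1. simpl. pose proof (b_beta (lamn (length Qs) ident) a) as Hb.
  fold (PP (length Qs)) in Hb. rewrite subst_PP in Hb. exact Hb.
Qed.

Lemma bound_red n m : forall hd Qs,
  (hd = PP n \/ exists y, y < m /\ hd = Var y) ->
  exists Qs', length Qs' = length Qs /\
    red_star (apps (lamn m (apps hd Qs)) (repeat (PP n) m)) (apps (PP n) Qs').
Proof.
  induction m; intros hd Qs Hhd.
  - destruct Hhd as [->|[y [Hy _]]]; [|lia]. exists Qs; split; auto. apply rt_refl.
  - set (hd' := subst m (PP n) hd).
    assert (Hhd' : hd' = PP n \/ exists y, y < m /\ hd' = Var y).
    { unfold hd'. destruct Hhd as [->|[y [Hy ->]]]. left; apply subst_PP.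
      rewrite subst_var. destruct (Nat.ltb_spec y m). right; eauto.
      assert (y = m) as -> by lia. rewrite Nat.eqb_refl. left; reflexivity. }
    destruct (IHm hd' (map (subst m (PP n)) Qs) Hhd') as [Qs' [Hl Hr]].
    exists Qs'. split. rewrite Hl, length_map; auto.
    eapply rt_trans; [|apply Hr]. simpl. apply red_apps. apply rs_step.
    pose proof (b_beta (lamn m (apps hd Qs)) (PP n)) as Hb.
    rewrite subst_lamn_closed in Hb by apply ren_PP.
    rewrite Nat.add_0_r, subst_apps in Hb. exact Hb.
Qed.

Lemma finite_PP n : finite_term (PP n).
Proof. unfold PP, ident; induction n; simpl; repeat constructor; auto. Qed.

Lemma hn_solvable_fin M : head_normalisable M -> solvable_fin M.
Proof.
  intros [N [Hr Hn]].
  assert (Hr' : red_star M N).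
  { clear Hn. induction Hr as [a b [Hs|Hb]| |].
    - apply rs_step. induction Hs; constructor; auto.
    - apply rs_bisim; auto.
    - apply rt_refl.
    - eapply rt_trans; eauto. }
  destruct (hnf_dec N Hn) as [m [y [Qs ->]]].
  destruct (Nat.ltb_spec y m) as [Hy|Hy].
  - exists [], (repeat (PP (length Qs)) m). split.
    + apply Forall_forall. intros x Hx. apply repeat_spec in Hx. subst; apply finite_PP.
    + destruct (bound_red (length Qs) m (Var y) Qs) as [Qs' [Hl Hr2]]; [eauto|].
      simpl. eapply rt_trans. apply red_apps; eauto.
      eapply rt_trans. apply Hr2. rewrite <- Hl. apply PP_reduce.
  - set (j := y - m).
    exists [j], (repeat (PP (length Qs)) (S m)). split.
    + apply Forall_forall. intros x Hx. apply repeat_spec in Hx. subst; apply finite_PP.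
    + change (abs_list [j] M) with (abs j M). unfold abs.
      set (fj := fun n => if n =? j then 0 else S n).
      assert (E : ren fj (lamn m (apps (Var y) Qs)) =
                  lamn m (apps (Var m) (map (ren (upn m fj)) Qs))).
      { rewrite ren_lamn, ren_apps, ren_var. f_equal. f_equal. f_equal.
        replace y with (m + j) by (unfold j; lia). rewrite upn_ge.
        unfold fj. rewrite Nat.eqb_refl. lia. }
      destruct (bound_red (length Qs) (S m) (Var m) (map (ren (upn m fj)) Qs))
        as [Qs' [Hl Hr2]]; [right; exists m; split; auto|].
      rewrite length_map in Hl.
      eapply rt_trans. apply red_apps. apply red_lam. apply red_ren. exact Hr'.
      rewrite E. eapply rt_trans. apply Hr2. rewrite <- Hl. apply PP_reduce.
Qed.

Lemma inf_red_ident X : inf_red X ident -> red_star X ident.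
Proof.
  intros [R [HR HX]]. pose proof (HR _ _ HX) as H. unfold ident in H.
  inversion H as [|M0 P P' Hr Hs| ]; subst. inversion Hs as [M1 x Hr2| |]; subst.
  eapply rt_trans. apply Hr. apply red_lam. auto.
Qed.

Lemma red_inf_red X : red_star X ident -> inf_red X ident.
Proof.
  intros H. exists (fun a b => b = ident /\ red_star a b). split; [|auto].
  intros a b [-> Hab]. unfold ident in *. eapply i_lam. apply Hab. apply i_var. apply rt_refl.
Qed.

Lemma finite_in001 t : finite_term t -> in001 t.
Proof.
  intros H. exists finite_term. split; auto.
  intros u Hu. induction Hu; constructor; auto.
Qed.

Lemma fin_001 M : solvable_fin M -> solvable_001 M.
Proof.
  intros [xs [Ns [HF Hr]]]. exists xs, Ns. split.
  - eapply Forall_impl; [|apply HF]. apply finite_in001.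
  - apply red_inf_red; auto.
Qed.

From Stdlib Require Import ClassicalEpsilon.

Inductive ty : Type := Star | Arr (ms : list ty) (A : ty).

Definition ty_dec (a b : ty) : {a = b} + {a <> b} := excluded_middle_informative _.
Definition cnt (A : ty) (l : list ty) : nat := count_occ ty_dec l A.

Lemma cnt_app A l1 l2 : cnt A (l1 ++ l2) = cnt A l1 + cnt A l2.
Proof. apply count_occ_app. Qed.
Lemma cnt_nil A : cnt A [] = 0. Proof. reflexivity. Qed.
Lemma cnt_cons A B l : cnt A (B :: l) = (if ty_dec B A then 1 else 0) + cnt A l.
Proof. unfold cnt; simpl. destruct (ty_dec B A); reflexivity. Qed.

Definition ctx := nat -> list ty.
Definition subm (l1 l2 : list ty) := forall A, cnt A l1 <= cnt A l2.
Definition cle (G D : ctx) := forall n A, cnt A (G n) <= cnt A (D n).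
Definition cplus (G D : ctx) : ctx := fun n => G n ++ D n.
Definition ccons (ms : list ty) (G : ctx) : ctx := fun n => match n with 0 => ms | S k => G k end.
Definition cempty : ctx := fun _ => [].
Definition remove (k : nat) (G : ctx) : ctx := fun n => if n <? k then G n else G (S n).

Inductive typ : ctx -> term -> ty -> nat -> Prop :=
| T_var G n A : subm [A] (G n) -> typ G (Var n) A 1
| T_lam G t ms A s : typ (ccons ms G) t A s -> typ G (Lam t) (Arr ms A) (S s)
| T_app G G1 G2 t u ms A s ss : typ G1 t (Arr ms A) s -> typs G2 u ms ss ->
    cle (cplus G1 G2) G -> typ G (App t u) A (S (s + ss))
with typs : ctx -> term -> list ty -> nat -> Prop :=
| Ts_nil G u : typs G u [] 0
| Ts_cons G G1 G2 u B ms s ss : typ G1 u B s -> typs G2 u ms ss ->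
    cle (cplus G1 G2) G -> typs G u (B :: ms) (s + ss).

Scheme typ_mind := Induction for typ Sort Prop
with typs_mind := Induction for typs Sort Prop.
Combined Scheme typ_comb from typ_mind, typs_mind.

Ltac cle_solve :=
  repeat match goal with H : cle _ _ |- _ => unfold cle in H end;
  repeat match goal with H : subm _ _ |- _ => unfold subm in H end;
  unfold cle, subm, cplus, ccons, cempty, remove in *; intros;
  repeat rewrite cnt_app in *; repeat rewrite cnt_nil in *.

Lemma cle_refl G : cle G G. Proof. intros n A; lia. Qed.
Lemma cle_trans G D E : cle G D -> cle D E -> cle G E.
Proof. intros H1 H2 n A; specialize (H1 n A); specialize (H2 n A); lia. Qed.

Lemma weaken_mut :
  (forall G t A s, typ G t A s -> forall D, cle G D -> typ D t A s) /\
  (forall G t ms s, typs G t ms s -> forall D, cle G D -> typs D t ms s).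
Proof.
  apply typ_comb; intros.
  - constructor. intros B. specialize (s B). specialize (H n B). lia.
  - constructor. apply H. intros [|n] B; simpl; auto.
  - econstructor; eauto. eapply cle_trans; eauto.
  - constructor.
  - econstructor; eauto. eapply cle_trans; eauto.
Qed.
Lemma weaken G t A s D : typ G t A s -> cle G D -> typ D t A s.
Proof. intros; eapply (proj1 weaken_mut); eauto. Qed.
Lemma weakens G t ms s D : typs G t ms s -> cle G D -> typs D t ms s.
Proof. intros; eapply (proj2 weaken_mut); eauto. Qed.

Lemma bisim_typ_mut :
  (forall G t A s, typ G t A s -> forall t', bisim t t' -> typ G t' A s) /\
  (forall G t ms s, typs G t ms s -> forall t', bisim t t' -> typs G t' ms s).
Proof.
  apply typ_comb; intros.
  - inversion H; subst. constructor; auto.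
  - inversion H0; subst. constructor; auto.
  - inversion H1; subst. econstructor; eauto.
  - constructor.
  - econstructor; eauto.
Qed.

Definition pf (g : nat -> option nat) (D : ctx) : ctx :=
  fun m => match g m with Some n => D n | None => [] end.
Definition upg (g : nat -> option nat) : nat -> option nat :=
  fun m => match m with 0 => Some 0 | S m => option_map S (g m) end.

Lemma ren_typ_mut :
  (forall G t A s, typ G t A s -> forall f g, (forall n, g (f n) = Some n) ->
     typ (pf g G) (ren f t) A s) /\
  (forall G t ms s, typs G t ms s -> forall f g, (forall n, g (f n) = Some n) ->
     typs (pf g G) (ren f t) ms s).
Proof.
  apply typ_comb; intros.
  - rewrite ren_var. constructor. unfold pf. rewrite H. auto.
  - rewrite ren_lam. constructor.
    eapply weaken. apply (H (up f) (upg g)). intros [|n]; simpl; auto. rewrite H0; auto.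
    intros [|m] B; unfold pf, upg, ccons; simpl; auto. destruct (g m); simpl; auto.
  - rewrite ren_app. econstructor; eauto.
    intros m B0. unfold pf, cplus. destruct (g m) as [n|]. apply c. simpl; lia.
  - constructor.
  - econstructor; eauto.
    intros m B0. unfold pf, cplus. destruct (g m) as [n|]. apply c. simpl; lia.
Qed.

Definition gS (m : nat) : option nat := match m with 0 => None | S n => Some n end.

Lemma typs_renS D N ms ss : typs D N ms ss -> typs (ccons [] D) (ren S N) ms ss.
Proof.
  intros H. eapply weakens. apply ((proj2 ren_typ_mut) _ _ _ _ H S gS). reflexivity.
  intros [|m] B; unfold pf; simpl; auto.
Qed.

Ltac ren_inv :=
  match goal with Heq : _ = ren ?f ?t |- _ =>
    destruct t; [rewrite ren_var in Heq| rewrite ren_lam in Heq| rewrite ren_app in Heq];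
    inversion Heq; subst; clear Heq end.

Lemma antiren_mut :
  (forall G u A s, typ G u A s -> forall f t, u = ren f t ->
     typ (fun n => G (f n)) t A s) /\
  (forall G u ms s, typs G u ms s -> forall f t, u = ren f t ->
     typs (fun n => G (f n)) t ms s).
Proof.
  apply typ_comb.
  - intros G n A Hs f t Heq. ren_inv. constructor; auto.
  - intros G t ms A s Ht IH f t' Heq. ren_inv.
    constructor. eapply weaken. apply (IH (up f) t'); auto.
    intros [|m] B; simpl; auto.
  - intros G G1 G2 t u ms A s ss Ht IH1 Hu IH2 Hc f t' Heq. ren_inv.
    econstructor. apply (IH1 f t'1); auto. apply (IH2 f t'2); auto.
    intros m B. apply (Hc (f m) B).
  - intros; constructor.
  - intros G G1 G2 u B ms s ss Ht IH1 Hu IH2 Hc f t Heq.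
    econstructor. apply (IH1 f t); auto. apply (IH2 f t); auto.
    intros m B0. apply (Hc (f m) B0).
Qed.

Lemma typs_pick N ms : forall D ss A, typs D N ms ss -> In A ms ->
  exists D1 D2 s1 s2 ms', typ D1 N A s1 /\ typs D2 N ms' s2 /\
    (forall B, cnt B ms = cnt B (A :: ms')) /\ cle (cplus D1 D2) D /\ s1 + s2 = ss.
Proof.
  induction ms as [|C ms IH]; intros D ss A H Hin; [destruct Hin|].
  inversion H as [|G G1 G2 u B ms0 s ss0 Ht Hs Hc]; subst.
  destruct Hin as [<-|Hin].
  - exists G1, G2, s, ss0, ms. repeat split; auto.
  - destruct (IH G2 ss0 A Hs Hin) as [D1 [D2 [s1 [s2 [ms' [H1 [H2 [H3 [H4 H5]]]]]]]]].
    exists D1, (cplus G1 D2), s1, (s + s2), (C :: ms'). repeat split; auto.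
    + econstructor; eauto. apply cle_refl.
    + intros B. rewrite !cnt_cons, H3, cnt_cons. lia.
    + intros n B. specialize (Hc n B). specialize (H4 n B). unfold cplus in *.
      rewrite !cnt_app in *. lia.
    + lia.
Qed.

Lemma typs_sub N ms1 : forall ms D ss, subm ms1 ms -> typs D N ms ss ->
  exists D1 D2 s1 s2 rest, typs D1 N ms1 s1 /\ typs D2 N rest s2 /\
    cle (cplus D1 D2) D /\ s1 + s2 = ss.
Proof.
  induction ms1 as [|A ms1 IH]; intros ms D ss Hsub H.
  - exists cempty, D, 0, ss, ms. repeat split; auto. constructor.
    intros n B. unfold cplus, cempty; simpl. lia.
  - assert (Hin : In A ms).
    { apply (count_occ_In ty_dec). specialize (Hsub A). unfold cnt in Hsub.
      simpl in Hsub. destruct (ty_dec A A); [lia|congruence]. }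
    destruct (typs_pick N ms D ss A H Hin) as [D1 [D2 [s1 [s2 [ms' [H1 [H2 [H3 [H4 H5]]]]]]]]].
    assert (Hsub' : subm ms1 ms').
    { intros B. specialize (Hsub B). rewrite H3, !cnt_cons in Hsub. lia. }
    destruct (IH ms' D2 s2 Hsub' H2) as [E1 [E2 [t1 [t2 [rest [G1 [G2 [G3 G4]]]]]]]].
    exists (cplus D1 E1), E2, (s1 + t1), t2, rest. repeat split; auto.
    + econstructor; eauto. apply cle_refl.
    + intros n B. specialize (H4 n B). specialize (G3 n B). unfold cplus in *.
      rewrite !cnt_app in *. lia.
    + lia.
Qed.

Lemma typs_app_inv N l1 : forall l2 D ss, typs D N (l1 ++ l2) ss ->
  exists D1 D2 s1 s2, typs D1 N l1 s1 /\ typs D2 N l2 s2 /\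
    cle (cplus D1 D2) D /\ s1 + s2 = ss.
Proof.
  induction l1 as [|A l1 IH]; intros l2 D ss H.
  - exists cempty, D, 0, ss. repeat split; auto. constructor.
    intros n B. unfold cplus, cempty; simpl. lia.
  - simpl in H. inversion H as [|G G1 G2 u B ms0 s ss0 Ht Hs Hc]; subst.
    destruct (IH l2 G2 ss0 Hs) as [D1 [D2 [s1 [s2 [H1 [H2 [H3 H4]]]]]]].
    exists (cplus G1 D1), D2, (s + s1), s2. repeat split; auto.
    + econstructor; eauto. apply cle_refl.
    + intros n B0. specialize (H3 n B0). specialize (Hc n B0). unfold cplus in *.
      rewrite !cnt_app in *. lia.
    + lia.
Qed.

Lemma typs_split N ms D ss ms1 ms2 : typs D N ms ss -> subm (ms1 ++ ms2) ms ->
  exists D1 D2 s1 s2, typs D1 N ms1 s1 /\ typs D2 N ms2 s2 /\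
    cle (cplus D1 D2) D /\ s1 + s2 <= ss.
Proof.
  intros H Hs.
  destruct (typs_sub N (ms1 ++ ms2) ms D ss Hs H) as [E1 [E2 [t1 [t2 [rest [G1 [G2 [G3 G4]]]]]]]].
  destruct (typs_app_inv N ms1 ms2 E1 t1 G1) as [D1 [D2 [s1 [s2 [H1 [H2 [H3 H4]]]]]]].
  exists D1, D2, s1, s2. repeat split; auto; [|lia].
  intros n B. specialize (H3 n B). specialize (G3 n B). unfold cplus in *.
  rewrite !cnt_app in *. lia.
Qed.

Lemma typs_app N l1 : forall l2 D1 D2 s1 s2, typs D1 N l1 s1 -> typs D2 N l2 s2 ->
  typs (cplus D1 D2) N (l1 ++ l2) (s1 + s2).
Proof.
  induction l1 as [|A l1 IH]; intros l2 D1 D2 s1 s2 H1 H2.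
  - inversion H1; subst. simpl. eapply weakens; eauto.
    intros n B. unfold cplus. rewrite cnt_app. lia.
  - inversion H1 as [|G G1 G0 u B ms0 s ss0 Ht Hs Hc]; subst. simpl.
    rewrite <- Nat.add_assoc. apply (Ts_cons _ G1 (cplus G0 D2)); auto.
    intros n B0. specialize (Hc n B0). unfold cplus in *. rewrite !cnt_app in *. lia.
Qed.

Lemma typs_one D N A ss : typs D N [A] ss -> exists D' s, typ D' N A s /\ cle D' D /\ s <= ss.
Proof.
  intros H. inversion H as [|G G1 G2 u B ms0 s ss0 Ht Hs Hc]; subst.
  exists G1, s. repeat split; auto; [|lia].
  intros n B0. specialize (Hc n B0). unfold cplus in *. rewrite !cnt_app in *. lia.
Qed.

Lemma remove_cle k G1 G2 G D1 D2 D : cle (cplus G1 G2) G -> cle (cplus D1 D2) D ->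
  cle (cplus (cplus (remove k G1) D1) (cplus (remove k G2) D2)) (cplus (remove k G) D).
Proof.
  intros H1 H2 n B. specialize (H2 n B). unfold cplus, remove in *.
  destruct (n <? k); [specialize (H1 n B)|specialize (H1 (S n) B)]; cbv beta in *;
  rewrite !cnt_app in *; lia.
Qed.

Lemma subst_typ_mut :
  (forall G t A s, typ G t A s -> forall k N D ss, typs D N (G k) ss ->
     exists s', s' <= s + ss /\ typ (cplus (remove k G) D) (subst k N t) A s') /\
  (forall G t ms s, typs G t ms s -> forall k N D ss, typs D N (G k) ss ->
     exists s', s' <= s + ss /\ typs (cplus (remove k G) D) (subst k N t) ms s').
Proof.
  apply typ_comb.
  - intros G n A Hs k N D ss HN. rewrite subst_var.
    destruct (lt_eq_lt_dec n k) as [[Hl|He]|Hg].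
    + assert (n <? k = true) as E by (apply Nat.ltb_lt; lia). rewrite E.
      exists 1. split; [lia|]. constructor. intros B. specialize (Hs B).
      unfold cplus, remove. rewrite E, cnt_app. lia.
    + subst. rewrite Nat.ltb_irrefl, Nat.eqb_refl.
      assert (Hs' : subm ([A] ++ []) (G k)) by (simpl; auto).
      destruct (typs_split _ _ _ _ _ _ HN Hs') as [D1 [D2 [s1 [s2 [H1 [H2 [H3 H4]]]]]]].
      destruct (typs_one _ _ _ _ H1) as [D' [s' [Ht [Hc Hle]]]].
      exists s'. split; [lia|]. eapply weaken; eauto.
      intros n B. specialize (Hc n B). specialize (H3 n B). unfold cplus in *.
      rewrite !cnt_app in *. lia.
    + assert (n <? k = false) as E by (apply Nat.ltb_ge; lia).
      assert (n =? k = false) as E2 by (apply Nat.eqb_neq; lia).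
      rewrite E, E2. exists 1. split; [lia|]. constructor. intros B. specialize (Hs B).
      unfold cplus, remove.
      assert (pred n <? k = false) as E3 by (apply Nat.ltb_ge; lia). rewrite E3.
      replace (S (pred n)) with n by lia. rewrite cnt_app. lia.
  - intros G t ms A s Ht IH k N D ss HN. rewrite subst_lam.
    destruct (IH (S k) (ren S N) (ccons [] D) ss) as [s' [Hle Ht']].
    { apply typs_renS. exact HN. }
    exists (S s'). split; [lia|]. constructor. eapply weaken; eauto.
    intros [|m] B; unfold cplus, remove, ccons; simpl.
    + rewrite cnt_app; simpl; lia.
    + change (S m <? S k) with (m <? k).
      destruct (Nat.ltb_spec m k); rewrite !cnt_app; lia.
  - intros G G1 G2 t u ms A s ss Ht IH1 Hu IH2 Hc k N D ss' HN.
    rewrite subst_app.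
    assert (Hs : subm (G1 k ++ G2 k) (G k)) by (intros B; apply (Hc k B)).
    destruct (typs_split _ _ _ _ _ _ HN Hs) as [D1 [D2 [s1 [s2 [H1 [H2 [H3 H4]]]]]]].
    destruct (IH1 k N D1 s1 H1) as [t1 [L1 T1]].
    destruct (IH2 k N D2 s2 H2) as [t2 [L2 T2]].
    exists (S (t1 + t2)). split; [lia|]. econstructor; eauto. apply remove_cle; auto.
  - intros G u k N D ss HN. exists 0. split; [lia|]. constructor.
  - intros G G1 G2 u B ms s ss Ht IH1 Hu IH2 Hc k N D ss' HN.
    assert (Hs : subm (G1 k ++ G2 k) (G k)) by (intros B0; apply (Hc k B0)).
    destruct (typs_split _ _ _ _ _ _ HN Hs) as [D1 [D2 [s1 [s2 [H1 [H2 [H3 H4]]]]]]].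
    destruct (IH1 k N D1 s1 H1) as [t1 [L1 T1]].
    destruct (IH2 k N D2 s2 H2) as [t2 [L2 T2]].
    exists (t1 + t2). split; [lia|]. econstructor; eauto. apply remove_cle; auto.
Qed.

Definition lift (k : nat) (G : ctx) : ctx :=
  fun m => if m <? k then G m else if m =? k then [] else G (pred m).

Definition single (k : nat) (ms : list ty) : ctx := fun m => if m =? k then ms else [].

Lemma remove_single k ms n : remove k (single k ms) n = [].
Proof.
  unfold remove, single. destruct (Nat.ltb_spec n k).
  - destruct (Nat.eqb_spec n k); auto; lia.
  - destruct (Nat.eqb_spec (S n) k); auto; lia.
Qed.

Lemma remove_lift k G n : remove k (lift k G) n = G n.
Proof.
  unfold remove, lift. destruct (Nat.ltb_spec n k).
  - auto.
  - destruct (Nat.ltb_spec (S n) k); [lia|]. destruct (Nat.eqb_spec (S n) k); [lia|]. auto.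
Qed.

Lemma antisubst_var_k G' N A s k : typ G' N A s ->
  exists G ms D s0 ss, typ G (Var k) A s0 /\ typs D N ms ss /\ G k = ms /\
    cle (cplus (remove k G) D) G'.
Proof.
  intros H. exists (single k [A]), [A], G', 1, (s + 0). repeat split.
  - constructor. unfold single. rewrite Nat.eqb_refl. intros B; lia.
  - econstructor; eauto. constructor. intros n B. unfold cplus, cempty. rewrite app_nil_r. lia.
  - unfold single. rewrite Nat.eqb_refl. auto.
  - intros n B. unfold cplus. rewrite remove_single. simpl. lia.
Qed.

Ltac subst_inv :=
  match goal with Heq : _ = subst ?k ?N ?t |- _ =>
    destruct t as [n'|b'|a' b'];
    [rewrite subst_var in Heq| rewrite subst_lam in Heq| rewrite subst_app in Heq] end.

Lemma antisubst_mut :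
  (forall G' u A s, typ G' u A s -> forall k N t, u = subst k N t ->
     exists G ms D s0 ss, typ G t A s0 /\ typs D N ms ss /\ G k = ms /\
       cle (cplus (remove k G) D) G') /\
  (forall G' u ms' s, typs G' u ms' s -> forall k N t, u = subst k N t ->
     exists G ms D s0 ss, typs G t ms' s0 /\ typs D N ms ss /\ G k = ms /\
       cle (cplus (remove k G) D) G').
Proof.
  apply typ_comb.
  - intros G' n A Hs k N t Heq. subst_inv.
    + revert Heq; destruct (Nat.ltb_spec n' k); intro Heq.
      * inversion Heq; subst. exists (lift k G'), [], cempty, 1, 0. repeat split.
        -- constructor. unfold lift. destruct (Nat.ltb_spec n' k); [auto|lia].
        -- constructor.
        -- unfold lift. rewrite Nat.ltb_irrefl, Nat.eqb_refl. auto.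
        -- intros m B. unfold cplus, cempty. rewrite remove_lift, app_nil_r. lia.
      * revert Heq; destruct (Nat.eqb_spec n' k); intro Heq.
        -- rewrite e, <- Heq. eapply antisubst_var_k. constructor; eauto.
        -- inversion Heq; subst. exists (lift k G'), [], cempty, 1, 0. repeat split.
           ++ constructor. unfold lift. revert Heq; destruct (Nat.ltb_spec n' k); intro Heq; [lia|].
              revert Heq; destruct (Nat.eqb_spec n' k); intro Heq; [lia|]. auto.
           ++ constructor.
           ++ unfold lift. rewrite Nat.ltb_irrefl, Nat.eqb_refl. auto.
           ++ intros m B. unfold cplus, cempty. rewrite remove_lift, app_nil_r. lia.
    + discriminate.
    + discriminate.
  - intros G' t ms A s Ht IH k N t0 Heq. subst_inv.
    + revert Heq; destruct (Nat.ltb_spec n' k); intro Heq; [discriminate|].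
      revert Heq; destruct (Nat.eqb_spec n' k); intro Heq; [|discriminate].
      rewrite e, <- Heq. eapply antisubst_var_k. constructor; eauto.
    + inversion Heq; subst.
      destruct (IH (S k) (ren S N) b' eq_refl) as [G0 [ms0 [D0 [s0 [ss [H1 [H2 [H3 H4]]]]]]]].
      exists (fun m => G0 (S m)), ms0, (fun m => D0 (S m)), (S s0), ss. repeat split.
      * constructor. eapply weaken; eauto. intros [|m] B.
        -- specialize (H4 0 B). unfold cplus, remove, ccons in H4. simpl in H4.
           rewrite cnt_app in H4. simpl. lia.
        -- simpl. lia.
      * exact ((proj2 antiren_mut) _ _ _ _ H2 S N eq_refl).
      * auto.
      * intros m B. specialize (H4 (S m) B). unfold cplus, remove, ccons in *.
        change (S m <? S k) with (m <? k) in H4. exact H4.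
    + discriminate.
  - intros G' G1 G2 t u ms A s ss Ht IH1 Hu IH2 Hc k N t0 Heq. subst_inv.
    + revert Heq; destruct (Nat.ltb_spec n' k); intro Heq; [discriminate|].
      revert Heq; destruct (Nat.eqb_spec n' k); intro Heq; [|discriminate].
      rewrite e, <- Heq. eapply antisubst_var_k. econstructor; eauto.
    + discriminate.
    + inversion Heq; subst.
      destruct (IH1 k N a' eq_refl) as [Ga [msa [Da [sa [ssa [A1 [A2 [A3 A4]]]]]]]].
      destruct (IH2 k N b' eq_refl) as [Gb [msb [Db [sb [ssb [B1 [B2 [B3 B4]]]]]]]].
      exists (cplus Ga Gb), (msa ++ msb), (cplus Da Db), (S (sa + sb)), (ssa + ssb).
      repeat split.
      * econstructor; eauto. apply cle_refl.
      * apply typs_app; auto.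
      * unfold cplus. rewrite A3, B3. auto.
      * intros m B. specialize (A4 m B). specialize (B4 m B). specialize (Hc m B).
        unfold cplus, remove in *. destruct (m <? k); rewrite !cnt_app in *; lia.
  - intros G u k N t Heq. exists cempty, [], cempty, 0, 0. repeat split; try constructor.
    intros m B. unfold cplus, remove, cempty. destruct (m <? k); simpl; lia.
  - intros G' G1 G2 u B ms s ss Ht IH1 Hu IH2 Hc k N t Heq.
      destruct (IH1 k N t Heq) as [Ga [msa [Da [sa [ssa [A1 [A2 [A3 A4]]]]]]]].
      destruct (IH2 k N t Heq) as [Gb [msb [Db [sb [ssb [B1 [B2 [B3 B4]]]]]]]].
      exists (cplus Ga Gb), (msa ++ msb), (cplus Da Db), (sa + sb), (ssa + ssb).
      repeat split.
      * econstructor; eauto. apply cle_refl.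
      * apply typs_app; auto.
      * unfold cplus. rewrite A3, B3. auto.
      * intros m B0. specialize (A4 m B0). specialize (B4 m B0). specialize (Hc m B0).
        unfold cplus, remove in *. destruct (m <? k); rewrite !cnt_app in *; lia.
Qed.

Lemma progress G t A s : typ G t A s ->
  hnf t \/ exists t' s', hstep t t' /\ typ G t' A s' /\ s' < s.
Proof.
  induction 1 as [G n A Hs|G t ms A s Ht IH|G G1 G2 t u ms A s ss Ht IH Hu Hc].
  - left. repeat constructor.
  - destruct IH as [Hn|[t' [s' [H1 [H2 H3]]]]].
    + left. apply hnf_lam; auto.
    + right. exists (Lam t'), (S s'). repeat split; [constructor; auto|constructor; auto|lia].
  - destruct t as [n|b|a c].
    + left. repeat constructor.
    + inversion Ht as [|G0 t0 ms0 A0 s0 Hb| ]; subst.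
      destruct ((proj1 subst_typ_mut) _ _ _ _ Hb 0 u G2 ss Hu) as [s' [Hle Ht']].
      right. exists (subst 0 u b), s'. repeat split; [constructor| |lia].
      eapply weaken; [exact Ht'|]. intros n B. specialize (Hc n B).
      unfold cplus, remove, ccons in *. simpl. exact Hc.
    + destruct IH as [Hn|[t' [s' [H1 [H2 H3]]]]].
      * left. inversion Hn; subst. constructor. constructor; auto.
      * right. exists (App t' u), (S (s' + ss)). repeat split; [|econstructor; eauto|lia].
        constructor; auto. intros b0; discriminate.
Qed.

Lemma typ_hn s : forall G t A, typ G t A s -> head_normalisable t.
Proof.
  induction s as [s IH] using (well_founded_induction lt_wf). intros G t A H.
  destruct (progress G t A s H) as [Hn|[t' [s' [H1 [H2 H3]]]]].
  - exists t. split; auto. apply rt_refl.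
  - destruct (IH s' H3 G t' A H2) as [N [HN1 HN2]]. exists N. split; auto.
    eapply rt_trans; [|apply HN1]. apply rt_step; left; auto.
Qed.

Lemma typs_expand N N' : (forall G A s, typ G N' A s -> exists s', typ G N A s') ->
  forall ms G ss, typs G N' ms ss -> exists ss', typs G N ms ss'.
Proof.
  intros H. induction ms; intros G ss Hs.
  - exists 0; constructor.
  - inversion Hs as [|G0 G1 G2 u B ms0 s ss0 Ht Hs' Hc]; subst.
    destruct (H _ _ _ Ht) as [s1 Hs1]. destruct (IHms _ _ Hs') as [s2 Hs2].
    exists (s1 + s2). econstructor; eauto.
Qed.

Lemma expand_step a b : bstep a b -> forall G A s, typ G b A s -> exists s', typ G a A s'.
Proof.
  induction 1 as [M N|M M' Hst IH|M M' N Hst IH|M N N' Hst IH]; intros G A s Hty.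
  - destruct ((proj1 antisubst_mut) _ _ _ _ Hty 0 N M eq_refl)
      as [G0 [ms [D [s0 [ss [H1 [H2 [H3 H4]]]]]]]].
    exists (S (S s0 + ss)). apply (T_app _ (remove 0 G0) D (Lam M) N ms).
    + constructor. eapply weaken; [exact H1|]. intros [|n] B; unfold ccons, remove; simpl.
      rewrite H3; lia. lia.
    + exact H2.
    + exact H4.
  - inversion Hty as [|G0 t0 ms0 A0 s0 Hb|]; subst. destruct (IH _ _ _ Hb) as [s' Hs']. exists (S s').
    constructor; auto.
  - inversion Hty as [| |G0 G1 G2 t0 u0 ms0 A0 s0 ss0 Ht Hu Hc]; subst.
    destruct (IH _ _ _ Ht) as [s' Hs'].
    eexists. econstructor; eauto.
  - inversion Hty as [| |G0 G1 G2 t0 u0 ms0 A0 s0 ss0 Ht Hu Hc]; subst.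
    destruct (typs_expand N N' IH _ _ _ Hu) as [ss' Hs'].
    eexists. econstructor; eauto.
Qed.

Lemma expand_red a b : red_star a b -> forall G A s, typ G b A s -> exists s', typ G a A s'.
Proof.
  intros Hr; induction Hr as [a b [Hs|Hb]|a|a b c Hab IH1 Hbc IH2]; intros G A s Hty.
  - eapply expand_step; eauto.
  - exists s. eapply (proj1 bisim_typ_mut); eauto. apply bisim_sym; auto.
  - eauto.
  - destruct (IH2 _ _ _ Hty) as [s' H']. eauto.
Qed.

Lemma apps_inv Ns : forall M G A s, typ G (apps M Ns) A s -> exists G' B s', typ G' M B s'.
Proof.
  induction Ns; intros M G A s H; simpl in H; eauto.
  destruct (IHNs _ _ _ _ H) as [G' [B [s' H']]].
  inversion H'; subst. eauto.
Qed.

Lemma abs_list_inv xs : forall M G A s, typ G (abs_list xs M) A s -> exists G' B s', typ G' M B s'.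
Proof.
  induction xs; intros M G A s H; simpl in H; eauto.
  unfold abs in H. inversion H as [|G0 t0 ms0 A0 s0 Hb|]; subst.
  pose proof ((proj1 antiren_mut) _ _ _ _ Hb _ _ eq_refl) as H'.
  eapply IHxs; eauto.
Qed.

Lemma typ_ident : typ cempty ident (Arr [Star] Star) 2.
Proof. unfold ident. constructor. constructor. intros B; simpl; lia. Qed.

Lemma red_ident_hn xs Ns M : red_star (apps (abs_list xs M) Ns) ident -> head_normalisable M.
Proof.
  intros H. destruct (expand_red _ _ H _ _ _ typ_ident) as [s Hs].
  destruct (apps_inv _ _ _ _ _ Hs) as [G1 [B1 [s1 H1]]].
  destruct (abs_list_inv _ _ _ _ _ H1) as [G2 [B2 [s2 H2]]].
  eapply typ_hn; eauto.
Qed.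

Theorem mainTheorem11 (M : term) (HM : in001 M) :
  (solvable_001 M <-> head_normalisable M) /\
  (head_normalisable M <-> solvable_fin M).
Proof.
  split; split.
  - intros [xs [Ns [_ H]]]. apply inf_red_ident in H. eapply red_ident_hn; eauto.
  - intros H. apply fin_001. apply hn_solvable_fin; auto.
  - apply hn_solvable_fin.
  - intros [xs [Ns [_ H]]]. eapply red_ident_hn; eauto.
Qed.
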